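(* Let $\Omega\subset\mathbb{P}(\mathbb{R}^d)$ be a properly convex domain, $\mathcal{C}\subset\Omega$ a non-empty closed convex subset, and $G\le\mathrm{Stab}_\Omega(\mathcal{C})$ a subgroup acting co-compactly on $\mathcal{C}$. If $x\in\partial_i\mathcal{C}$, then there exists a non-zero $T\in\overline{G}^{\mathrm{End}}$ such that (1) $\mathbb{P}(\ker T)\cap\Omega=\emptyset$, (2) $T(\Omega)=F_\Omega(x)$, and (3) $T(\mathcal{C})=F_\Omega(x)\cap\partial_i\mathcal{C}$, where for $p=[v]\in\Omega$ we write $T(p)=[Tv]$.
   Context: Properly convex domain: open subset of $\mathbb{P}(\mathbb{R}^d)$ which is a bounded convex set in some affine chart. $\mathrm{Stab}_\Omega(X)=\{g\in\mathrm{Aut}(\Omega):gX=X\}$. For $G\le\mathrm{PGL}_d(\mathbb{R})$, $\overline{G}^{\mathrm{End}}$ is the closure in $\mathrm{End}(\mathbb{R}^d)$ of $\{g\in\mathrm{GL}_d(\mathbb{R}):[g]\in G\}$. For a convex set $C$: $\mathrm{relint}(C)$ is its interior in the projective span, $\partial C=\overline{C}\setminus\mathrm{relint}(C)$, and the ideal boundary is $\partial_i C=\partial C\setminus C$. Open face: $F_\Omega(x)=\{x\}\cup\{y\in\overline{\Omega}:\exists$ an open line segment in $\overline{\Omega}$ containing $x$ and $y\}$. Co-compact: there is a compact $K\subset\mathcal{C}$ with $G\cdot K=\mathcal{C}$. *)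

(* Defs.v *)
(* Stdlib reals (R), with MathComp ordinals 'I_d as index type and
   bigop for finite sums. Projective subsets of P(R^d) are represented by
   their (scale-invariant, 0-free) cones in R^d. *)
From Stdlib Require Import Reals.
From mathcomp Require Import ssreflect ssrfun ssrbool eqtype ssrnat seq fintype bigop.

Set Implicit Arguments. Unset Strict Implicit.
Local Open Scope R_scope.

Definition vec (d : nat) := 'I_d -> R.
Definition mat (d : nat) := 'I_d -> 'I_d -> R.

Definition vzero (d : nat) : vec d := fun _ => 0.
Definition mzero (d : nat) : mat d := fun _ _ => 0.
Definition vscale (d : nat) (t : R) (v : vec d) : vec d := fun i => t * v i.
Definition vadd (d : nat) (v w : vec d) : vec d := fun i => v i + w i.
Definition comb (d : nat) (v w : vec d) (t : R) : vec d :=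
  vadd (vscale (1 - t) v) (vscale t w).
Definition dot (d : nat) (f v : vec d) : R := \big[Rplus/0]_(j < d) (f j * v j).
Definition mapply (d : nat) (A : mat d) (v : vec d) : vec d :=
  fun i => \big[Rplus/0]_(j < d) (A i j * v j).
Definition mmul (d : nat) (A B : mat d) : mat d :=
  fun i k => \big[Rplus/0]_(j < d) (A i j * B j k).
Definition mid (d : nat) : mat d := fun i j => if i == j then 1 else 0.
Arguments vzero d : clear implicits.
Arguments mzero d : clear implicits.
Arguments mid d : clear implicits.
Definition mscale (d : nat) (t : R) (A : mat d) : mat d := fun i j => t * A i j.

Definition close (d : nat) (v w : vec d) (eps : R) : Prop :=
  forall i, Rabs (v i - w i) < eps.
Definition mclose (d : nat) (A B : mat d) (eps : R) : Prop :=
  forall i j, Rabs (A i j - B i j) < eps.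

(* w represents the same projective point as v (w = t v, t <> 0) *)
Definition proportional (d : nat) (w v : vec d) : Prop :=
  exists t, t <> 0 /\ w = vscale t v.

(* a subset of P(R^d), given as its cone in R^d \ {0} *)
Definition cone_set (d : nat) (S : vec d -> Prop) : Prop :=
  ~ S (vzero d) /\ forall v t, t <> 0 -> (S v <-> S (vscale t v)).

Definition proj_open (d : nat) (S : vec d -> Prop) : Prop :=
  forall v, S v -> exists eps, 0 < eps /\ forall w, close v w eps -> S w.

(* closure in P(R^d) (as a cone) *)
Definition pclosure (d : nat) (S : vec d -> Prop) (v : vec d) : Prop :=
  v <> vzero d /\ forall eps, 0 < eps -> exists w, S w /\ close v w eps.

(* properly convex domain: open, nonempty, and a bounded convex set in the
   affine chart {f <> 0} (identified with the slice {f = 1}) *)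
Definition properly_convex_domain (d : nat) (Om : vec d -> Prop) : Prop :=
  cone_set Om /\ proj_open Om /\ (exists v, Om v) /\
  exists f : vec d,
    (forall v, Om v -> dot f v <> 0) /\
    (exists M, forall v, Om v -> dot f v = 1 -> forall i, Rabs (v i) <= M) /\
    (forall v w t, Om v -> Om w -> dot f v = 1 -> dot f w = 1 ->
        0 <= t <= 1 -> Om (comb v w t)).

(* C (a subset of Om) is convex: whenever the segment between [v],[w]
   lies in Om, it lies in C (chart-free form of convexity in Om's chart) *)
Definition convex_in (d : nat) (Om C : vec d -> Prop) : Prop :=
  forall v w, C v -> C w -> (forall t, 0 <= t <= 1 -> Om (comb v w t)) ->
    forall t, 0 <= t <= 1 -> C (comb v w t).

Definition closed_in (d : nat) (Om C : vec d -> Prop) : Prop :=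
  forall v, Om v -> pclosure C v -> C v.

Definition invertible (d : nat) (g : mat d) : Prop :=
  exists h, mmul h g = mid d /\ mmul g h = mid d.

Definition preserves (d : nat) (g : mat d) (S : vec d -> Prop) : Prop :=
  forall v, S v <-> S (mapply g v).

(* Gs = {g in GL_d : [g] in G}, for a subgroup G of Stab_Om(C) <= PGL_d *)
Definition lifted_subgroup_Stab (d : nat) (Om C : vec d -> Prop)
    (Gs : mat d -> Prop) : Prop :=
  (forall g, Gs g -> invertible g /\ preserves g Om /\ preserves g C) /\
  Gs (mid d) /\
  (forall g h, Gs g -> Gs h -> Gs (mmul g h)) /\
  (forall g, Gs g -> exists h, Gs h /\ mmul h g = mid d) /\
  (forall g t, Gs g -> t <> 0 -> Gs (mscale t g)).

(* G acts co-compactly on C: there is a compact K in P(R^d), K subset C,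
   with G.K = C.  A compact K in P(R^d) is given by a compact set of
   representatives K' (closed, bounded, 0 not in K') in R^d. *)
Definition cocompact (d : nat) (Gs : mat d -> Prop) (C : vec d -> Prop) : Prop :=
  exists K : vec d -> Prop,
    (forall k, K k -> C k) /\
    (exists M, forall k, K k -> forall i, Rabs (k i) <= M) /\
    (forall v, (forall eps, 0 < eps -> exists w, K w /\ close v w eps) -> K v) /\
    (forall v, C v -> exists g k, Gs g /\ K k /\ proportional v (mapply g k)).

Definition inSpan (d : nat) (C : vec d -> Prop) (w : vec d) : Prop :=
  exists (n : nat) (c : nat -> R) (u : nat -> vec d),
    (forall k, (k < n)%nat -> C (u k)) /\
    w = (fun i => \big[Rplus/0]_(k < n) (c k * u k i)).

(* relative interior: interior in the projective span *)
Definition relint (d : nat) (C : vec d -> Prop) (v : vec d) : Prop :=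
  C v /\ exists eps, 0 < eps /\
    forall w, inSpan C w -> close v w eps -> C w.

(* boundary  dC = cl C \ relint C ;  ideal boundary d_i C = dC \ C *)
Definition pboundary (d : nat) (C : vec d -> Prop) (v : vec d) : Prop :=
  pclosure C v /\ ~ relint C v.
Definition idealBoundary (d : nat) (C : vec d -> Prop) (v : vec d) : Prop :=
  pboundary C v /\ ~ C v.

(* open face F_Om(x): {x} together with the y in cl Om such that some open
   segment (a,b) contained in cl Om contains x and y *)
Definition openFace (d : nat) (Om : vec d -> Prop) (x y : vec d) : Prop :=
  proportional y x \/
  (pclosure Om y /\
   exists (a b : vec d) (s t : R),
     (forall r, 0 <= r <= 1 -> pclosure Om (comb a b r)) /\
     0 < s < 1 /\ 0 < t < 1 /\
     proportional x (comb a b s) /\ proportional y (comb a b t)).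

(* closure of the lifts of G in End(R^d) *)
Definition End_closure (d : nat) (Gs : mat d -> Prop) (T : mat d) : Prop :=
  forall eps, 0 < eps -> exists g, Gs g /\ mclose T g eps.

(* T(S) = {[T v] : [v] in S} as a cone *)
Definition imgset (d : nat) (T : mat d) (S : vec d -> Prop) (w : vec d) : Prop :=
  exists v, S v /\ proportional w (mapply T v).

(* Main.v *)
Require Import Defs.
From Stdlib Require Import Reals Lra Lia Psatz.
From Stdlib Require Import Classical ClassicalEpsilon FunctionalExtensionality.
From mathcomp Require Import ssreflect ssrfun ssrbool eqtype ssrnat seq fintype bigop.
From HB Require Import structures.
From mathcomp Require Import zify.

Set Implicit Arguments. Unset Strict Implicit.
Set Warnings "-redundant-canonical-projection".
Local Open Scope R_scope.

HB.instance Definition _ := Monoid.isComLaw.Build R 0 Rplus (fun a b c => esym (Rplus_assoc a b c)) Rplus_comm Rplus_0_l.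

Definition subseqf (phi : nat -> nat) := forall n, lt (phi n) (phi (S n)).

Lemma subseqf_ge phi : subseqf phi -> forall n, le n (phi n).
Proof. move=> H; elim=> [|n IH]; [lia| have := H n; lia]. Qed.

Lemma subseqf_mono phi : subseqf phi -> forall n m, le n m -> le (phi n) (phi m).
Proof. move=> H n m; elim: m => [|m IH] Hle. have ->: n = 0%nat by lia. lia.
case: (Nat.eq_dec n (S m)) => [->|Hne]; [lia|]. have := H m; have := IH ltac:(lia); lia. Qed.

Lemma subseqf_comp phi psi : subseqf phi -> subseqf psi -> subseqf (fun n => phi (psi n)).
Proof. move=> H1 H2 n. have := H2 n. move=> h. have := @subseqf_mono phi H1 (psi n).+1 (psi n.+1) ltac:(lia).
have := H1 (psi n). lia. Qed.

Lemma cv_sub u l phi : subseqf phi -> Un_cv u l -> Un_cv (fun n => u (phi n)) l.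
Proof. move=> Hp H eps He. case: (H eps He) => N HN. exists N => n Hn.
apply: HN. have := @subseqf_ge phi Hp n. unfold ge in *; lia. Qed.

Lemma cv_const c : Un_cv (fun _ => c) c.
Proof. move=> eps He; exists 0%nat => n _. rewrite /R_dist Rminus_diag Rabs_R0 //. Qed.

Lemma Rabs_bnd a B : Rabs a <= B -> -B <= a <= B.
Proof. unfold Rabs; destruct (Rcase_abs a); lra. Qed.

Lemma BW1 (u : nat -> R) B : (forall n, Rabs (u n) <= B) ->
  exists phi l, subseqf phi /\ Un_cv (fun n => u (phi n)) l.
Proof.
move=> Hb. have [l Hl] : exists l, ValAdh u l.
  apply: (Bolzano_Weierstrass u (fun c => -B <= c <= B)). apply compact_P3.
  move=> n. have := Hb n. move/Rabs_bnd. done.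
have step : forall N m, exists p, le N p /\ Rabs (u p - l) < / (INR m + 1).
  move=> N m. have Hpos : 0 < / (INR m + 1). apply Rinv_0_lt_compat. have := pos_INR m; lra.
  have Hnb : neighbourhood (disc l (mkposreal _ Hpos)) l.
    exists (mkposreal _ Hpos). move=> y; done.
  case: (Hl _ N Hnb) => p [Hp1 Hp2].
  by exists p; split.
pose nxt := fun N m => proj1_sig (constructive_indefinite_description _ (step N m)).
have nxtP : forall N m, le N (nxt N m) /\ Rabs (u (nxt N m) - l) < / (INR m + 1).
  move=> N m. rewrite /nxt. case: (constructive_indefinite_description _ _) => p Hp. exact Hp.
pose phi := fix phi n := match n with 0 => nxt 0%nat 0%nat | S k => nxt (S (phi k)) (S k) end.
exists phi, l; split.
  move=> n /=. have := (nxtP (S (phi n)) (S n)).1. lia.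
move=> eps He. have [N HN] := archimed_cor1 eps He.
exists N => n Hn. rewrite /R_dist.
have Hb2 : Rabs (u (phi n) - l) < / (INR n + 1).
  case: n Hn => [|n] Hn /=; [exact (nxtP _ _).2 | exact (nxtP _ _).2].
apply: (Rlt_le_trans _ _ _ Hb2).
apply: Rle_trans (Rlt_le _ _ (proj1 HN)).
apply Rinv_le_contravar. apply lt_0_INR; exact HN.2.
have : le N n by unfold ge in Hn; lia. move/le_INR. lra.
Qed.

Lemma BWfin (I : finType) (u : nat -> I -> R) B : (forall n i, Rabs (u n i) <= B) ->
  exists phi (l : I -> R), subseqf phi /\ forall i, Un_cv (fun n => u (phi n) i) (l i).
Proof.
move=> Hb.
suff: forall s : seq I, exists phi (l : I -> R), subseqf phi /\
   forall i, i \in s -> Un_cv (fun n => u (phi n) i) (l i).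
  move=> /(_ (enum I)) [phi [l [H1 H2]]]. exists phi, l; split => // i.
  apply: H2. by rewrite mem_enum.
elim=> [|i0 s [phi [l [H1 H2]]]].
  exists id, (fun _ => 0); split => //. move=> n /=; lia.
have [psi [li [Hp Hc]]] := @BW1 (fun n => u (phi n) i0) B (fun n => Hb _ _).
exists (fun n => phi (psi n)), (fun j => if j == i0 then li else l j); split.
  exact: subseqf_comp.
move=> j; rewrite in_cons; case: eqP => [->|_] /= Hj; first exact Hc.
exact: (@cv_sub (fun n => u (phi n) j) _ _ Hp (H2 j Hj)).
Qed.

Lemma cv_unif (I : finType) (u : nat -> I -> R) (l : I -> R) :
  (forall i, Un_cv (fun n => u n i) (l i)) -> forall eps, 0 < eps ->
  exists N, forall n, le N n -> forall i, Rabs (u n i - l i) < eps.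
Proof.
move=> H eps He.
suff: forall s : seq I, exists N, forall n, le N n -> forall i, i \in s -> Rabs (u n i - l i) < eps.
  move=> /(_ (enum I)) [N HN]. exists N => n Hn i. apply: HN => //. by rewrite mem_enum.
elim=> [|i0 s [N HN]]. by exists 0%nat.
have [N0 HN0] := H i0 eps He.
exists (Nat.max N N0) => n Hn j. rewrite in_cons; case: eqP => [->|_] /= Hj.
  apply: HN0. unfold ge; lia.
apply: HN => //; lia.
Qed.

Lemma cv_ext (u v : nat -> R) l : (forall n, u n = v n) -> Un_cv u l -> Un_cv v l.
Proof. move=> E H eps He; case: (H eps He) => N HN; exists N => n Hn; rewrite -E; auto. Qed.

Section Sums.
Variable I : Type.
Implicit Types r : seq I.

Lemma sum_cv r (F : nat -> I -> R) (L : I -> R) :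
  (forall j, Un_cv (fun n => F n j) (L j)) ->
  Un_cv (fun n => \big[Rplus/0]_(j <- r) F n j) (\big[Rplus/0]_(j <- r) L j).
Proof.
move=> H; elim: r => [|j r IH].
  apply: (cv_ext (u := fun _ => 0)) => [n|]; rewrite ?big_nil //. exact: cv_const.
apply: (cv_ext (u := fun n => F n j + \big[Rplus/0]_(j <- r) F n j)) => [n|]; rewrite ?big_cons //.
exact: CV_plus.
Qed.

Lemma sum_lin r (F G : I -> R) c1 c2 :
  \big[Rplus/0]_(j <- r) (c1 * F j + c2 * G j) =
  c1 * \big[Rplus/0]_(j <- r) F j + c2 * \big[Rplus/0]_(j <- r) G j.
Proof. elim: r => [|j r IH]; rewrite ?big_nil ?big_cons; [ring| rewrite IH; ring]. Qed.

Lemma sum_scal r (F : I -> R) c :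
  \big[Rplus/0]_(j <- r) (c * F j) = c * \big[Rplus/0]_(j <- r) F j.
Proof. elim: r => [|j r IH]; rewrite ?big_nil ?big_cons; [ring| rewrite IH; ring]. Qed.

Lemma sum_le r (F G : I -> R) : (forall j, F j <= G j) ->
  \big[Rplus/0]_(j <- r) F j <= \big[Rplus/0]_(j <- r) G j.
Proof. move=> H; elim: r => [|j r IH]; rewrite ?big_nil ?big_cons; [lra| have := H j; lra]. Qed.

Lemma sum_abs r (F : I -> R) :
  Rabs (\big[Rplus/0]_(j <- r) F j) <= \big[Rplus/0]_(j <- r) Rabs (F j).
Proof. elim: r => [|j r IH]; rewrite ?big_nil ?big_cons. rewrite Rabs_R0; lra.
apply: Rle_trans (Rabs_triang _ _) _. lra. Qed.

Lemma sum_ge0 r (F : I -> R) : (forall j, 0 <= F j) -> 0 <= \big[Rplus/0]_(j <- r) F j.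
Proof. move=> H; elim: r => [|j r IH]; rewrite ?big_nil ?big_cons; [lra| have := H j; lra]. Qed.
End Sums.

Section Vec.
Variable d : nat.
Implicit Types (f v w a b : vec d) (A B : mat d).

Lemma vext v w : (forall i, v i = w i) -> v = w.
Proof. move=> H; exact: functional_extensionality. Qed.

Lemma mapply_lin A a b c1 c2 i :
  mapply A (fun j => c1 * a j + c2 * b j) i = c1 * mapply A a i + c2 * mapply A b i.
Proof. rewrite /mapply -sum_lin. apply: eq_bigr => j _; ring. Qed.

Lemma dot_lin f a b c1 c2 :
  dot f (fun j => c1 * a j + c2 * b j) = c1 * dot f a + c2 * dot f b.
Proof. rewrite /dot -sum_lin. apply: eq_bigr => j _; ring. Qed.

Lemma mapply_mmul A B v i : mapply (mmul A B) v i = mapply A (mapply B v) i.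
Proof.
rewrite /mapply /mmul.
under eq_bigr => j _ do rewrite Rmult_comm -sum_scal.
rewrite exchange_big /=. apply: eq_bigr => k _.
rewrite -sum_scal. apply: eq_bigr => j _; ring.
Qed.

Lemma mapply_mid v i : mapply (mid d) v i = v i.
Proof.
rewrite /mapply /mid (bigD1 i) //= eqxx big1 => [|j Hj]; [ring|rewrite eq_sym (negbTE Hj); ring].
Qed.

Lemma mapply_mscale t A v i : mapply (mscale t A) v i = t * mapply A v i.
Proof. rewrite /mapply /mscale -sum_scal. apply: eq_bigr => j _; ring. Qed.

Lemma mapply_zero A i : mapply A (vzero d) i = 0.
Proof. rewrite /mapply big1 // => j _; rewrite /vzero; ring. Qed.

Lemma dot_zero f : dot f (vzero d) = 0.
Proof. rewrite /dot big1 // => j _; rewrite /vzero; ring. Qed.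

Lemma coord_le_sum v i : Rabs (v i) <= \big[Rplus/0]_(j < d) Rabs (v j).
Proof. rewrite (bigD1 i) //=.
have : 0 <= \big[Rplus/0]_(j < d | j != i) Rabs (v j).
  apply: big_ind => [|x y|j _]; [lra|lra|exact: Rabs_pos].
move=> H; rewrite -{1}(Rplus_0_r (Rabs (v i))); apply: Rplus_le_compat_l; exact: H. Qed.

Lemma vbound v : exists Bd, forall i, Rabs (v i) <= Bd.
Proof. exists (\big[Rplus/0]_(j < d) Rabs (v j)) => i; exact: coord_le_sum. Qed.

Definition FS (f : vec d) := \big[Rplus/0]_(j < d) Rabs (f j).

Lemma FS_ge0 f : 0 <= FS f.
Proof. apply: sum_ge0 => j; exact: Rabs_pos. Qed.

Lemma dot_bound f v Bd : (forall j, Rabs (v j) <= Bd) -> Rabs (dot f v) <= FS f * Bd.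
Proof.
move=> H. apply: Rle_trans (sum_abs _ _) _. rewrite /FS Rmult_comm -sum_scal.
apply: sum_le => j. rewrite Rabs_mult Rmult_comm. apply Rmult_le_compat_r; [exact: Rabs_pos|exact: H].
Qed.

Lemma mapply_cv (An : nat -> mat d) T (wn : nat -> vec d) w i :
  (forall i j, Un_cv (fun n => An n i j) (T i j)) -> (forall j, Un_cv (fun n => wn n j) (w j)) ->
  Un_cv (fun n => mapply (An n) (wn n) i) (mapply T w i).
Proof. move=> HA Hw. apply: sum_cv => j. exact: CV_mult. Qed.

Lemma dot_cv f (wn : nat -> vec d) w :
  (forall j, Un_cv (fun n => wn n j) (w j)) -> Un_cv (fun n => dot f (wn n)) (dot f w).
Proof. move=> Hw. apply: sum_cv => j. apply: CV_mult => //. exact: cv_const. Qed.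
End Vec.

Lemma aff_sign A B t1 t2 : t1 <= t2 -> (forall t, t1 <= t <= t2 -> A + t * B <> 0) ->
  0 < (A + t1 * B) * (A + t2 * B).
Proof.
move=> Ht H. have H1 := H t1 ltac:(lra). have H2 := H t2 ltac:(lra).
apply: Rnot_le_lt => Hle.
have Hneg : (A + t1 * B) * (A + t2 * B) < 0.
  case: (Rle_lt_or_eq_dec _ _ Hle) => // Heq. exfalso. case: (Rmult_integral _ _ Heq); auto.
have HB : B <> 0. move=> HB; rewrite HB in Hneg. nra.
apply: (H (- A / B)).
  split; apply: Rnot_lt_le => Hc.
  - have : 0 < (A + t1 * B) * (A + t2 * B); last lra.
    have E1 : A + t1 * B = B * (t1 - (- A / B)) by field.
    have E2 : A + t2 * B = B * (t2 - (- A / B)) by field.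
    rewrite E1 E2. have : 0 < B * B by nra. nra.
  - have : 0 < (A + t1 * B) * (A + t2 * B); last lra.
    have E1 : A + t1 * B = B * (t1 - (- A / B)) by field.
    have E2 : A + t2 * B = B * (t2 - (- A / B)) by field.
    rewrite E1 E2. have : 0 < B * B by nra. nra.
field; auto.
Qed.

Lemma le_eps a b c : 0 <= c -> (forall eps, 0 < eps -> a <= b + c * eps) -> a <= b.
Proof.
move=> Hc H. apply: Rnot_lt_le => Hlt.
have := H ((a - b) / (2 * (c + 1))) ltac:(apply: Rdiv_lt_0_compat; lra).
have : c * ((a - b) / (2 * (c + 1))) <= (a - b) / 2.
  rewrite /Rdiv. have Hp : 0 < / (2 * (c+1)) by apply: Rinv_0_lt_compat; lra.
  have : c * / (2 * (c + 1)) <= / 2.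
    apply: (Rmult_le_reg_r (2 * (c+1))); first lra.
    rewrite Rmult_assoc Rinv_l; last lra. field_simplify; lra.
  nra.
lra.
Qed.

Lemma Rdiv_le_0_compat a b : 0 <= a -> 0 < b -> 0 <= a / b.
Proof. move=> Ha Hb. apply: Rmult_le_pos => //. apply: Rlt_le; exact: Rinv_0_lt_compat. Qed.

Lemma pos_comb X Y r : 0 < X -> 0 < Y -> 0 <= r <= 1 -> 0 < (1 - r) * X + r * Y.
Proof. move=> HX HY Hr. case: (Rle_lt_or_eq_dec _ _ (proj1 Hr)) => [h|<-]; last lra.
have : 0 <= (1 - r) * X by apply: Rmult_le_pos; lra.
have : 0 < r * Y by apply: Rmult_lt_0_compat. lra. Qed.

Lemma abs_sign a b : Rabs (b - a) < Rabs a -> 0 < a * b.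
Proof. unfold Rabs; destruct (Rcase_abs (b - a)); destruct (Rcase_abs a); nra. Qed.

Set Default Proof Using "All".
Section Geom.
Variable d : nat.
Implicit Types (f v w a b k u : vec d).

Lemma dot_aff f a b t : dot f (fun i => a i + t * b i) = dot f a + t * dot f b.
Proof. rewrite /dot -(Rmult_1_l (\big[Rplus/0]_(j < d) (f j * a j))) -sum_lin.
apply: eq_bigr => j _; ring. Qed.

Lemma dot_sub f a b : dot f (fun i => a i - b i) = dot f a - dot f b.
Proof. have := dot_lin f a b 1 (-1). rewrite /dot => E.
transitivity (\big[Rplus/0]_(j < d) (f j * (1 * a j + -1 * b j))). apply: eq_bigr => j _; ring.
rewrite E; ring. Qed.

Lemma dot_scale f a t : dot f (vscale t a) = t * dot f a.
Proof. rewrite /dot /vscale -sum_scal. apply: eq_bigr => j _; ring. Qed.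

Lemma dot_comb f a b t : dot f (comb a b t) = (1 - t) * dot f a + t * dot f b.
Proof. rewrite /comb /vadd /vscale. exact: dot_lin. Qed.

Lemma mapply_aff (A : mat d) a b t i : mapply A (fun i => a i + t * b i) i = mapply A a i + t * mapply A b i.
Proof. rewrite /mapply -(Rmult_1_l (\big[Rplus/0]_(j < d) (A i j * a j))) -sum_lin.
apply: eq_bigr => j _; ring. Qed.

Lemma mapply_sub (A : mat d) a b i : mapply A (fun i => a i - b i) i = mapply A a i - mapply A b i.
Proof. have := mapply_lin A a b 1 (-1) i. rewrite /mapply => E.
transitivity (\big[Rplus/0]_(j < d) (A i j * (1 * a j + -1 * b j))). apply: eq_bigr => j _; ring.
rewrite E; ring. Qed.

Lemma mapply_scale (A : mat d) a t i : mapply A (vscale t a) i = t * mapply A a i.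
Proof. rewrite /mapply /vscale -sum_scal. apply: eq_bigr => j _; ring. Qed.

Lemma mapply_comb (A : mat d) a b t i : mapply A (comb a b t) i = (1 - t) * mapply A a i + t * mapply A b i.
Proof. rewrite /comb /vadd /vscale. exact: mapply_lin. Qed.

Lemma close_dot f v w e : close v w e -> Rabs (dot f v - dot f w) <= FS f * e.
Proof. move=> H. rewrite -dot_sub. apply: dot_bound => j. apply: Rlt_le; exact: H. Qed.

Lemma pclosure_mono (S S' : vec d -> Prop) w : (forall v, S v -> S' v) -> pclosure S w -> pclosure S' w.
Proof. move=> H [H1 H2]; split => // e He. case: (H2 e He) => w' [Hw1 Hw2]. exists w'; auto. Qed.

Lemma pclosure_scale (S : vec d -> Prop) w t : cone_set S -> t <> 0 -> pclosure S w -> pclosure S (vscale t w).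
Proof.
move=> [_ HS] Ht [Hw0 Hw]. split.
  move=> E; apply: Hw0; apply: vext => i. have := f_equal (fun z => z i) E. rewrite /vscale /vzero => E'.
  have : t * w i = 0 by exact E'. move=> /Rmult_integral [//|//].
move=> e He. have Hta : 0 < Rabs t by apply: Rabs_pos_lt.
case: (Hw (e / Rabs t) ltac:(apply: Rdiv_lt_0_compat; lra)) => w' [Hw'1 Hw'2].
exists (vscale t w'); split. exact: (proj1 (HS w' t Ht) Hw'1).
move=> i. rewrite /vscale -Rmult_minus_distr_l Rabs_mult.
have := Hw'2 i. move=> h. apply: (Rmult_lt_reg_r (/ Rabs t)). by apply: Rinv_0_lt_compat.
rewrite Rmult_comm -Rmult_assoc Rinv_l ?Rmult_1_l; last lra. exact h.
Qed.

Lemma lim_clos (S : vec d -> Prop) (un : nat -> vec d) w : (forall n, S (un n)) ->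
  (forall i, Un_cv (fun n => un n i) (w i)) -> w <> vzero d -> pclosure S w.
Proof.
move=> HS Hc Hw; split => // e He. have [N HN] := cv_unif Hc He.
exists (un N); split => // i. rewrite -Rabs_Ropp Ropp_minus_distr. exact: HN.
Qed.

Variables (Om : vec d -> Prop) (f : vec d) (M : R).
Hypothesis HM : 0 <= M.
Hypothesis Hcone : cone_set Om.
Hypothesis Hopen : proj_open Om.
Hypothesis Hf : forall v, Om v -> dot f v <> 0.
Hypothesis Hbd : forall v, Om v -> dot f v = 1 -> forall i, Rabs (v i) <= M.
Hypothesis Hcvx : forall v w t, Om v -> Om w -> dot f v = 1 -> dot f w = 1 ->
        0 <= t <= 1 -> Om (comb v w t).

Lemma Om_scale v t : Om v -> t <> 0 -> Om (vscale t v).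
Proof. move=> H Ht. by apply/(Hcone.2 v t Ht). Qed.

Lemma Om_bound w i : Om w -> Rabs (w i) <= M * Rabs (dot f w).
Proof.
move=> Hw. have Hfw := Hf Hw.
have Hw' : Om (vscale (/ dot f w) w) by apply: Om_scale => //; exact: Rinv_neq_0_compat.
have := Hbd Hw'. rewrite dot_scale Rinv_l // => /(_ erefl i). rewrite /vscale Rabs_mult Rabs_inv => H.
have Hp : 0 < Rabs (dot f w) by apply: Rabs_pos_lt.
apply: (Rmult_le_reg_l (/ Rabs (dot f w))). exact: Rinv_0_lt_compat.
have -> : / Rabs (dot f w) * (M * Rabs (dot f w)) = M by field; lra.
exact H.
Qed.

Lemma seg_Om a b r : Om a -> Om b -> 0 < dot f a * dot f b -> 0 <= r <= 1 -> Om (comb a b r).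
Proof.
move=> Ha Hb Hab Hr. have Hfa := Hf Ha. have Hfb := Hf Hb.
set fa := dot f a in Hab Hfa *; set fb := dot f b in Hab Hfb *.
have Ha' : Om (vscale (/ fa) a) by apply: Om_scale => //; exact: Rinv_neq_0_compat.
have Hb' : Om (vscale (/ fb) b) by apply: Om_scale => //; exact: Rinv_neq_0_compat.
set c := (1 - r) * fa + r * fb.
have Hfa2 : 0 < fa * fa by nra.
have Hfb2 : 0 < fb * fb by nra.
have Hc : c * fa > 0. have -> : c * fa = (1 - r) * (fa * fa) + r * (fa * fb) by rewrite /c; ring.
  exact: pos_comb.
have Hcb : c * fb > 0. have -> : c * fb = (1 - r) * (fa * fb) + r * (fb * fb) by rewrite /c; ring.
  exact: pos_comb.
have Hc0 : c <> 0 by move=> E; rewrite E in Hc; lra.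
have Hcc : 0 < c * c by nra.
set r' := r * fb / c.
have e1 : r' * (c * c) = r * (c * fb) by rewrite /r'; field.
have e2 : (1 - r') * (c * c) = (1 - r) * (c * fa).
  rewrite /r'. have -> : (1 - r * fb / c) * (c * c) = c * (c - r * fb) by field.
  rewrite {2}/c. ring.
have Hr' : 0 <= r' <= 1. split.
  - apply: (Rmult_le_reg_r (c * c)) => //. rewrite Rmult_0_l e1. nra.
  - have : 0 <= (1 - r') * (c * c) by rewrite e2; nra. nra.
have := Hcvx Ha' Hb' (t := r'). rewrite !dot_scale -/fa -/fb !Rinv_l // => /(_ erefl erefl Hr') HOm.
have := Om_scale HOm Hc0. congr Om. apply: vext => i. rewrite /vscale /comb /vadd /vscale /r'.
have -> : c * ((1 - r * fb / c) * (/ fa * a i) + r * fb / c * (/ fb * b i)) = (c - r*fb) / fa * a i + r * b i.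
  field. split; auto.
rewrite /c. field. auto.
Qed.

Lemma ball_sign k u eps : (forall w, close k w eps -> Om w) -> close k u eps -> 0 < dot f k * dot f u.
Proof.
move=> Hball Hu.
have := @aff_sign (dot f k) (dot f u - dot f k) 0 1 ltac:(lra).
have -> : dot f k + 0 * (dot f u - dot f k) = dot f k by ring.
have -> : dot f k + 1 * (dot f u - dot f k) = dot f u by ring.
apply => t Ht. rewrite -dot_sub -dot_aff. apply: Hf. apply: Hball => i.
have := Hu i. rewrite -Rabs_Ropp. move=> h. apply: Rle_lt_trans h.
have -> : k i - (k i + t * (u i - k i)) = t * (k i - u i) by ring.
rewrite Rabs_Ropp Rabs_mult.
have : Rabs t <= 1 by rewrite Rabs_right; lra. have := Rabs_pos (k i - u i). have := Rabs_pos t. nra.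
Qed.

Lemma interior_limit k w r : Om k ->
  (forall e, 0 < e -> exists w', Om w' /\ 0 < dot f w' * dot f k /\ close w w' e) ->
  0 <= r < 1 -> Om (comb k w r).
Proof.
move=> Hk Happ Hr. case: (Hopen Hk) => eps [He Hball].
case: (Happ (eps * (1 - r)) ltac:(nra)) => w' [Hw' [Hs Hcl]].
set k' : vec d := fun i => k i + (r / (1 - r)) * (w i - w' i).
have Hk'c : close k k' eps.
  move=> i. rewrite /k'. have -> : k i - (k i + r / (1 - r) * (w i - w' i)) = - (r / (1 - r) * (w i - w' i)) by ring.
  rewrite Rabs_Ropp Rabs_mult Rabs_right; last by apply: Rle_ge; apply: Rdiv_le_0_compat; lra.
  have := Hcl i. move=> h.
  have : r / (1 - r) * Rabs (w i - w' i) <= r / (1 - r) * (eps * (1 - r)).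
    apply: Rmult_le_compat_l. apply: Rdiv_le_0_compat; lra. lra.
  have -> : r / (1 - r) * (eps * (1 - r)) = r * eps by field; lra.
  nra.
have Hk' := Hball _ Hk'c. have Hs2 := ball_sign Hball Hk'c.
have : Om (comb k' w' r). apply: seg_Om => //; [nra|lra].
congr Om. apply: vext => i. rewrite /comb /vadd /vscale /k'. field. lra.
Qed.

Lemma clos_bound w i : pclosure Om w -> Rabs (w i) <= M * Rabs (dot f w).
Proof.
move=> [Hw0 Hw]. apply: (@le_eps _ _ (M * FS f + 1)). have := FS_ge0 f. nra.
move=> e He. case: (Hw e He) => w' [Hw' Hc].
have h1 := Om_bound i Hw'. have h2 := close_dot f Hc. have h3 := Hc i.
have : Rabs (w i) <= Rabs (w' i) + e.
  have E : w i = (w i - w' i) + w' i by ring. rewrite {1}E. apply: Rle_trans (Rabs_triang _ _) _. lra.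
have : Rabs (dot f w') <= Rabs (dot f w) + FS f * e.
  have E : dot f w' = (dot f w' - dot f w) + dot f w by ring. rewrite {1}E. apply: Rle_trans (Rabs_triang _ _) _.
  rewrite -Rabs_Ropp Ropp_minus_distr in h2. lra.
nra.
Qed.

Lemma clos_f w : pclosure Om w -> dot f w <> 0.
Proof.
move=> Hw E. apply: Hw.1. apply: vext => i. have := clos_bound i Hw. rewrite E Rabs_R0 Rmult_0_r.
rewrite /vzero. have := Rabs_pos (w i). move=> h1 h2. have : Rabs (w i) = 0 by lra.
move=> h3. case: (Req_dec (w i) 0) => // Hne. have := Rabs_pos_lt _ Hne. lra.
Qed.

Lemma sign_approx (S : vec d -> Prop) w : (forall v, S v -> Om v) -> pclosure S w ->
  forall e, 0 < e -> exists w', S w' /\ close w w' e /\ 0 < dot f w * dot f w'.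
Proof.
move=> HS Hw e He. have Hfw := clos_f (pclosure_mono HS Hw).
have Hp : 0 < Rabs (dot f w) by apply: Rabs_pos_lt.
set e' := Rmin e (Rabs (dot f w) / (2 * (FS f + 1))).
have He' : 0 < e'. apply: Rmin_pos => //. apply: Rdiv_lt_0_compat => //. have := FS_ge0 f; lra.
case: (Hw.2 e' He') => w' [Hw' Hc]. exists w'; split => //; split.
  move=> i; apply: Rlt_le_trans (Hc i) _; exact: Rmin_l.
apply: abs_sign. have := close_dot f Hc. rewrite -Rabs_Ropp Ropp_minus_distr => h.
apply: Rle_lt_trans h _.
have : e' <= Rabs (dot f w) / (2 * (FS f + 1)) by exact: Rmin_r.
have := FS_ge0 f. move=> h0 h1.
have : FS f * e' <= FS f * (Rabs (dot f w) / (2 * (FS f + 1))) by apply: Rmult_le_compat_l.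
have : FS f * (Rabs (dot f w) / (2 * (FS f + 1))) < Rabs (dot f w).
  apply: (Rmult_lt_reg_r (2 * (FS f + 1))). lra. field_simplify; nra.
lra.
Qed.

Lemma interior_clos k w r : Om k -> pclosure Om w -> 0 < dot f k * dot f w -> 0 <= r < 1 ->
  Om (comb k w r).
Proof.
move=> Hk Hw Hs Hr. apply: interior_limit => // e He.
case: (sign_approx (fun v h => h) Hw He) => w' [Hw' [Hc Hs']].
exists w'; split => //; split => //. have := Hf Hk. have := clos_f Hw. nra.
Qed.


Lemma two_abs F x : 0 < F * (F + x) -> 0 < F * (F - x) -> Rabs (F + x) + Rabs (F - x) = 2 * Rabs F.
Proof. unfold Rabs; destruct (Rcase_abs (F + x)); destruct (Rcase_abs (F - x)); destruct (Rcase_abs F); nra. Qed.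

Lemma two_tri (p y : R) : 2 * Rabs y <= Rabs (p + y) + Rabs (p - y).
Proof. have E : 2 * y = (p + y) + - (p - y) by ring.
have : Rabs (2 * y) = 2 * Rabs y by rewrite Rabs_mult Rabs_right; lra.
move=> <-. rewrite E. apply: Rle_trans (Rabs_triang _ _) _. rewrite Rabs_Ropp. lra. Qed.

Definition ev (i : 'I_d) : vec d := fun q => if q == i then 1 else 0.

Lemma mapply_ev (g : mat d) i j : mapply g (ev i) j = g j i.
Proof. rewrite /mapply /ev (bigD1 i) //= eqxx big1 => [|q Hk]; [ring|rewrite (negbTE Hk); ring]. Qed.

Lemma norm_bound (g : mat d) v eps : 0 < eps -> (forall w, Om w -> Om (mapply g w)) ->
  (forall w, close v w eps -> Om w) ->
  forall j i, Rabs (g j i) <= (2 * M / eps) * Rabs (dot f (mapply g v)).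
Proof.
move=> He Hg Hball j i. set t0 := eps / 2.
set P := fun t => mapply g (fun q => v q + t * ev i q).
have HP : forall t, Rabs t <= t0 -> Om (P t).
  move=> t Ht. apply: Hg. apply: Hball => q. rewrite /ev.
  have -> : v q - (v q + t * (if q == i then 1 else 0)) = - (t * (if q == i then 1 else 0)) by ring.
  rewrite Rabs_Ropp Rabs_mult. case: (q == i); rewrite ?Rabs_R1 ?Rabs_R0; rewrite /t0 in Ht; lra.
have EP : forall t, P t = fun j => mapply g v j + t * mapply g (ev i) j.
  move=> t. apply: vext => q. rewrite /P mapply_aff //.
have FP : forall t, dot f (P t) = dot f (mapply g v) + t * dot f (mapply g (ev i)).
  move=> t. rewrite EP dot_aff //.
set F := dot f (mapply g v). set B := dot f (mapply g (ev i)).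
have Ht0 : 0 < t0 by rewrite /t0; lra.
have S1 : 0 < (F + 0 * B) * (F + t0 * B).
  apply: aff_sign; first lra. move=> t Ht. rewrite -FP. apply: Hf. apply: HP. rewrite Rabs_right; lra.
have S2 : 0 < (F + (- t0) * B) * (F + 0 * B).
  apply: aff_sign; first lra. move=> t Ht. rewrite -FP. apply: Hf. apply: HP. rewrite Rabs_left1; lra.
have B1 := Om_bound j (HP t0 ltac:(rewrite Rabs_right; lra)).
have B2 := Om_bound j (HP (- t0) ltac:(rewrite Rabs_left1; lra)).
rewrite FP EP /= in B1. rewrite FP EP /= in B2. rewrite -/F -/B in B1 B2.
rewrite mapply_ev in B1 B2.
have Esum : Rabs (F + t0 * B) + Rabs (F - t0 * B) = 2 * Rabs F.
  apply: two_abs. nra. nra.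
have T := two_tri (mapply g v j) (t0 * g j i).
have B2' : Rabs (mapply g v j - t0 * g j i) <= M * Rabs (F - t0 * B).
  have E1 : mapply g v j - t0 * g j i = mapply g v j + - t0 * g j i by ring.
  have E2 : F - t0 * B = F + - t0 * B by ring. rewrite E1 E2; exact B2.
have : 2 * Rabs (t0 * g j i) <= 2 * M * Rabs F. nra.
rewrite Rabs_mult Rabs_right; last lra. move=> h.
apply: (Rmult_le_reg_l t0) => //. rewrite /t0 in h *.
have -> : eps / 2 * (2 * M / eps * Rabs F) = M * Rabs F by field; lra.
lra.
Qed.

Lemma seg_sign a b : (forall r, 0 <= r <= 1 -> pclosure Om (comb a b r)) ->
  forall r1 r2, 0 <= r1 <= 1 -> 0 <= r2 <= 1 -> 0 < dot f (comb a b r1) * dot f (comb a b r2).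
Proof.
move=> H.
have key : forall r1 r2, 0 <= r1 <= 1 -> 0 <= r2 <= 1 -> r1 <= r2 ->
   0 < dot f (comb a b r1) * dot f (comb a b r2).
  move=> r1 r2 H1 H2 H12. rewrite !dot_comb.
  have := @aff_sign (dot f a) (dot f b - dot f a) r1 r2 H12.
  have E : forall r, dot f a + r * (dot f b - dot f a) = (1 - r) * dot f a + r * dot f b by move=> r; ring.
  rewrite !E. apply => t Ht. rewrite E -dot_comb. apply: clos_f. apply: H. lra.
move=> r1 r2 H1 H2. case: (Rle_dec r1 r2) => h. exact: key.
rewrite Rmult_comm. apply: key => //. lra.
Qed.

Lemma face_notOm x w : ~ Om x -> openFace Om x w -> ~ Om w.
Proof.
move=> Hx [[t [Ht ->]] | [Hw [a [b [s [t [Hseg [Hs [Ht [[al [Hal Ex]] [be [Hbe Ew]]]]]]]]]]]] HOm.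
  apply: Hx. have := Om_scale HOm (Rinv_neq_0_compat _ Ht). congr Om. apply: vext => i.
  rewrite /vscale. field. done.
have HEt : Om (comb a b t).
  rewrite Ew in HOm. have := Om_scale HOm (Rinv_neq_0_compat _ Hbe). congr Om. apply: vext => i.
  rewrite /vscale. field. done.
suff : Om (comb a b s).
  move=> H. apply: Hx. rewrite Ex. exact: Om_scale.
have Hsg := seg_sign Hseg.
case: (Rle_dec s t) => Hst.
  have := @interior_clos (comb a b t) (comb a b 0) (1 - s / t) HEt (Hseg 0 ltac:(lra))
     (Hsg t 0 ltac:(lra) ltac:(lra)).
  have : 0 <= 1 - s / t < 1. split.
    have : s / t <= 1. apply: (Rmult_le_reg_r t). lra. field_simplify; lra. lra.
    have : 0 < s / t by apply: Rdiv_lt_0_compat; lra. lra.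
  move=> h /(_ h). congr Om. apply: vext => i. rewrite /comb /vadd /vscale. field. lra.
have := @interior_clos (comb a b t) (comb a b 1) ((s - t) / (1 - t)) HEt (Hseg 1 ltac:(lra))
   (Hsg t 1 ltac:(lra) ltac:(lra)).
have : 0 <= (s - t) / (1 - t) < 1. split.
  apply: Rdiv_le_0_compat; lra.
  apply: (Rmult_lt_reg_r (1 - t)). lra. field_simplify; lra.
move=> h /(_ h). congr Om. apply: vext => i. rewrite /comb /vadd /vscale. field. lra.
Qed.

End Geom.

Lemma choice_fun (A B : Type) (P : A -> B -> Prop) : (forall a, exists b, P a b) -> exists g, forall a, P a (g a).
Proof. move=> H. exists (fun a => proj1_sig (constructive_indefinite_description _ (H a))).
move=> a. exact: (proj2_sig (constructive_indefinite_description _ (H a))). Qed.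

Lemma sign_trans a b c : 0 < a * b -> 0 < b * c -> 0 < a * c.
Proof. move=> H1 H2. have := Rmult_lt_0_compat _ _ H1 H2. nra. Qed.

Lemma sB_bound A X lam : 0 < lam -> 0 < (A - lam * X) * A -> 0 < A * (A + (1 + lam) * X) ->
  Rabs X <= Rabs A / lam.
Proof.
move=> Hl H1 H2. apply: (Rmult_le_reg_r lam) => //. rewrite /Rdiv Rmult_assoc Rinv_l; last lra.
rewrite Rmult_1_r. unfold Rabs; destruct (Rcase_abs X); destruct (Rcase_abs A); nra.
Qed.

Lemma rmu_in s t lam mu : 0 < s < 1 -> 0 < t < 1 -> 0 <= lam -> lam <= s -> lam <= 1 - s ->
  lam <= t -> lam <= 1 - t -> - lam <= mu <= 1 + lam -> 0 <= s + mu * (t - s) <= 1.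
Proof.
move=> Hs Ht Hl H1 H2 H3 H4 Hmu.
case: (Rle_dec mu 0) => h1.
  case: (Rle_dec s t) => h2; split; nra.
case: (Rle_dec mu 1) => h3.
  case: (Rle_dec s t) => h2; split; nra.
case: (Rle_dec s t) => h2; split; nra.
Qed.

Lemma cv_abs u l : Un_cv u l -> Un_cv (fun n => Rabs (u n)) (Rabs l).
Proof. move=> H eps He. case: (H eps He) => N HN. exists N => n Hn. rewrite /R_dist.
apply: Rle_lt_trans (Rabs_triang_inv2 _ _) _. exact: HN. Qed.

Lemma cv_s : Un_cv (fun n => 1 - / (INR n + 2)) 1.
Proof.
move=> eps He. have [N [HN HN0]] := archimed_cor1 eps He. exists N => n Hn. rewrite /R_dist.
have Hp : 0 < INR n + 2 by have := pos_INR n; lra.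
have -> : 1 - / (INR n + 2) - 1 = - / (INR n + 2) by ring.
rewrite Rabs_Ropp Rabs_right; last by apply: Rle_ge; apply: Rlt_le; apply: Rinv_0_lt_compat.
apply: Rle_lt_trans HN. apply: Rinv_le_contravar. apply: lt_0_INR; lia.
have : le N n by unfold ge in Hn; lia. move/le_INR. lra.
Qed.

Theorem mainTheorem7 (d : nat) (Om C : vec d -> Prop) (Gs : mat d -> Prop)
  (x : vec d) :
  properly_convex_domain Om ->
  cone_set C -> (exists v, C v) -> (forall v, C v -> Om v) ->
  convex_in Om C -> closed_in Om C ->
  lifted_subgroup_Stab Om C Gs ->
  cocompact Gs C ->
  idealBoundary C x ->
  exists T : mat d,
    T <> mzero d /\ End_closure Gs T /\
    (forall v, Om v -> mapply T v <> vzero d) /\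
    (forall w, imgset T Om w <-> openFace Om x w) /\
    (forall w, imgset T C w <-> (openFace Om x w /\ idealBoundary C w)).
Proof.
move=> [HconeOm [HopenOm [_ [f [Hf [[M0 Hbd0] Hcvx]]]]]] HconeC [p00 Hp00] HCOm HconvC HclC
  [Hstab [_ [_ [_ Hscal]]]] [K [HKC [[MK HKb] [HKcl HKcov]]]] [[Hxcl Hxnrel] HxnC].
pose M := Rmax M0 0.
have HM : 0 <= M by apply: Rmax_r.
have Hbd : forall v, Om v -> dot f v = 1 -> forall i, Rabs (v i) <= M.
  move=> v Hv H1 i. apply: Rle_trans (Hbd0 v Hv H1 i) _. apply: Rmax_l.
have Om_nz : forall v, Om v -> v <> vzero d. move=> v Hv E. apply: HconeOm.1. by rewrite -E.
have Hxcl' : pclosure Om x := pclosure_mono HCOm Hxcl.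
have Hfx := clos_f HM HconeOm HopenOm Hf Hbd Hcvx Hxcl'.
have [p0 [Hp0 Hp0x]] : exists p0, C p0 /\ 0 < dot f p0 * dot f x.
  have Hf0 := Hf _ (HCOm _ Hp00).
  case: (Rlt_dec 0 (dot f p00 * dot f x)) => h.
    exists p00; split => //.
  exists (vscale (-1) p00); split.
    exact: (proj1 (HconeC.2 p00 (-1) ltac:(lra)) Hp00).
  rewrite dot_scale. have : dot f p00 * dot f x <> 0 by apply: Rmult_integral_contrapositive.
  lra.
have Hp0O := HCOm _ Hp0.
have L8 : forall w r, pclosure C w -> 0 < dot f p0 * dot f w -> 0 <= r < 1 -> C (comb p0 w r).
  move=> w r Hw Hs Hr.
  have HwO := pclosure_mono HCOm Hw.
  have HO : Om (comb p0 w r) by exact: (interior_clos HM HconeOm HopenOm Hf Hbd Hcvx Hp0O HwO Hs Hr).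
  apply: HclC => //. split; first exact: Om_nz.
  move=> e He. case: (sign_approx HM HconeOm HopenOm Hf Hbd Hcvx HCOm Hw He) => w' [Hw' [Hc Hs']].
  exists (comb p0 w' r); split.
    apply: HconvC => //; last lra. move=> t Ht. apply: (seg_Om HM HconeOm HopenOm Hf Hbd Hcvx) => //. exact: HCOm.
    apply: sign_trans Hs Hs'.
  move=> i. rewrite /comb /vadd /vscale.
  have -> : (1 - r) * p0 i + r * w i - ((1 - r) * p0 i + r * w' i) = r * (w i - w' i) by ring.
  rewrite Rabs_mult Rabs_right; last lra. have := Hc i. have := Rabs_pos (w i - w' i). nra.
pose s := fun n : nat => 1 - / (INR n + 2).
have Hsb : forall n, 1/2 <= s n < 1.
  move=> n. rewrite /s. have Hp : 0 < INR n + 2 by have := pos_INR n; lra.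
  have : 0 < / (INR n + 2) by apply: Rinv_0_lt_compat.
  have : / (INR n + 2) <= / 2 by apply: Rinv_le_contravar; [lra| have := pos_INR n; lra].
  lra.
pose q := fun n => comb p0 x (s n).
have HqC : forall n, C (q n).
  move=> n. apply: L8 => //. have := Hsb n; lra.
have [ch Hch] : exists ch : nat -> mat d * vec d, forall n,
    Gs (ch n).1 /\ K (ch n).2 /\ mapply (ch n).1 (ch n).2 = q n.
  apply: (@choice_fun nat (mat d * vec d) (fun n p => Gs p.1 /\ K p.2 /\ mapply p.1 p.2 = q n)) => n. case: (HKcov _ (HqC n)) => g [k0 [Hg [Hk0 [t [Ht E]]]]].
  exists (mscale t g, k0); split; first exact: Hscal. split => //.
  rewrite E. apply: vext => i. rewrite mapply_mscale //.
pose Gn := fun n => (ch n).1. pose Kn := fun n => (ch n).2.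
have [phi1 [k [Hphi1 Hk]]] := @BWfin _ (fun n => Kn n) MK (fun n i => HKb _ (proj1 (proj2 (Hch n))) i).
have HkK : K k.
  apply: HKcl => eps He. have [N HN] := cv_unif Hk He.
  exists (Kn (phi1 N)); split. exact: (Hch _).2.1.
  move=> i. rewrite -Rabs_Ropp Ropp_minus_distr. exact: HN.
have HkO : Om k by apply: HCOm; apply: HKC.
case: (HopenOm _ HkO) => epsk [Hepsk Hballk].
have [N0 HN0] := cv_unif Hk (ltac:(lra) : 0 < epsk / 2).
have [Bp Hbp] := vbound p0. have [Bx Hbx] := vbound x.
have Hqb : forall n i, Rabs (q n i) <= Bp + Bx.
  move=> n i. rewrite /q /comb /vadd /vscale. have hs := Hsb n.
  apply: Rle_trans (Rabs_triang _ _) _. rewrite !Rabs_mult (Rabs_right (1 - s n)) ?(Rabs_right (s n)); try lra.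
  have := Hbp i. have := Hbx i. have := Rabs_pos (p0 i). have := Rabs_pos (x i). nra.
have Hpres : forall g, Gs g -> forall w, Om w -> Om (mapply g w).
  move=> g Hg w Hw. exact: (proj1 ((Hstab g Hg).2.1 w) Hw).
have HGb : forall n i j, Rabs (Gn (phi1 (n + N0)%nat) i j) <= (2 * M / (epsk / 2)) * (FS f * (Bp + Bx)).
  move=> n i j.
  apply: Rle_trans.
    apply: (norm_bound HM HconeOm HopenOm Hf Hbd Hcvx (v := Kn (phi1 (n + N0)%nat)) (eps := epsk / 2)).
    - lra.
    - apply: Hpres. exact: (Hch _).1.
    - move=> w Hw. apply: Hballk => l. have := HN0 (n + N0)%nat ltac:(lia) l. have := Hw l.
      move=> h1 h2. have E : k l - w l = (Kn (phi1 (n + N0)%nat) l - w l) - (Kn (phi1 (n + N0)%nat) l - k l) by ring.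
      rewrite E. apply: Rle_lt_trans (Rabs_triang _ _) _. rewrite Rabs_Ropp. lra.
  apply: Rmult_le_compat_l. apply: Rmult_le_pos. lra. apply: Rlt_le; apply: Rinv_0_lt_compat; lra.
  rewrite /Gn /Kn (Hch _).2.2. apply: dot_bound. move=> j'; exact: Hqb.
have [phi2 [Tl [Hphi2 HT]]] := @BWfin ('I_d * 'I_d)%type
   (fun n p => Gn (phi1 (n + N0)%nat) p.1 p.2) _ (fun n p => HGb n p.1 p.2).
pose T : mat d := fun i j => Tl (i, j).
pose phi := fun n => phi1 (phi2 n + N0)%nat.
have Hphi : subseqf phi.
  rewrite /phi. apply: (@subseqf_comp phi1 (fun n => phi2 n + N0)%nat) => // n. have := Hphi2 n. lia.
pose G' := fun n => Gn (phi n). pose K' := fun n => Kn (phi n).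
pose s' := fun n => s (phi n). pose q' := fun n => q (phi n).
have HG' : forall i j, Un_cv (fun n => G' n i j) (T i j).
  move=> i j. exact: (HT (i, j)).
have HK' : forall i, Un_cv (fun n => K' n i) (k i).
  move=> i. apply: (@cv_sub (fun n => Kn (phi1 n) i) (k i) (fun n => phi2 n + N0)%nat) => //.
  move=> n. have := Hphi2 n. lia.
have Hs' : Un_cv s' 1 by apply: (@cv_sub s 1 phi) => //; exact: cv_s.
have Hq' : forall i, Un_cv (fun n => q' n i) (x i).
  move=> i. rewrite /q' /q /comb /vadd /vscale.
  have := CV_plus _ _ _ _ (CV_mult _ _ _ _ (CV_minus _ _ _ _ (cv_const 1) Hs') (cv_const (p0 i)))
                          (CV_mult _ _ _ _ Hs' (cv_const (x i))).
  have -> : (1 - 1) * p0 i + 1 * x i = x i by ring. done.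
have HGK : forall n, mapply (G' n) (K' n) = q' n by move=> n; exact: (Hch _).2.2.
have HTk : mapply T k = x.
  apply: vext => i. apply: (UL_sequence (fun n => mapply (G' n) (K' n) i)).
    exact: mapply_cv.
  apply: cv_ext (Hq' i) => n. by rewrite HGK.
have HGs' : forall n, Gs (G' n) := fun n => (Hch (phi n)).1.
have [Hn HHn] : exists Hn : nat -> mat d, forall n, mmul (Hn n) (G' n) = mid d /\ mmul (G' n) (Hn n) = mid d.
  apply: (@choice_fun nat (mat d) (fun n h => mmul h (G' n) = mid d /\ mmul (G' n) h = mid d)) => n.
  exact: (Hstab _ (HGs' n)).1.
have HHG : forall n w, mapply (Hn n) (mapply (G' n) w) = w.
  move=> n w. apply: vext => i. by rewrite -mapply_mmul (HHn n).1 mapply_mid.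
have HGH : forall n w, mapply (G' n) (mapply (Hn n) w) = w.
  move=> n w. apply: vext => i. by rewrite -mapply_mmul (HHn n).2 mapply_mid.
have HpO : forall n w, Om w -> Om (mapply (G' n) w).
  move=> n w Hw. exact: (proj1 ((Hstab _ (HGs' n)).2.1 w) Hw).
have HpC : forall n w, C w -> C (mapply (G' n) w).
  move=> n w Hw. exact: (proj1 ((Hstab _ (HGs' n)).2.2 w) Hw).
have HpHO : forall n w, Om w -> Om (mapply (Hn n) w).
  move=> n w Hw. apply: (proj2 ((Hstab _ (HGs' n)).2.1 _)). by rewrite HGH.
have HpHC : forall n w, C w -> C (mapply (Hn n) w).
  move=> n w Hw. apply: (proj2 ((Hstab _ (HGs' n)).2.2 _)). by rewrite HGH.
have [i0 [j0 HT0]] : exists i j, T i j <> 0.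
  apply: NNPP => H. apply: Hxcl.1. rewrite -HTk. apply: vext => i.
  rewrite /mapply /vzero big1 // => j _.
  have -> : T i j = 0 by apply: NNPP => h; apply: H; exists i, j. ring.
have HTcv : forall u i, Un_cv (fun n => mapply (G' n) u i) (mapply T u i).
  move=> u i. apply: (@mapply_cv d G' T (fun _ => u)) => // j. exact: cv_const.
have TfO : forall u, Om u -> dot f (mapply T u) <> 0.
  move=> u Hu. case: (HopenOm _ Hu) => eu [Heu Hbu].
  have Hnb : forall n, Rabs (G' n i0 j0) <= (2 * M / eu) * Rabs (dot f (mapply (G' n) u)).
    move=> n. exact: (norm_bound HM HconeOm HopenOm Hf Hbd Hcvx Heu (HpO n) Hbu i0 j0).
  have := Rle_cv_lim Hnb (cv_abs (HG' i0 j0))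
     (CV_mult _ _ _ _ (cv_const (2 * M / eu)) (cv_abs (dot_cv f (HTcv u)))).
  move=> h E. rewrite E Rabs_R0 Rmult_0_r in h. have := Rabs_pos_lt _ HT0. lra.
have Tnz : forall u, Om u -> mapply T u <> vzero d.
  move=> u Hu E. apply: (TfO u Hu). rewrite E. exact: dot_zero.
have TclO : forall u, Om u -> pclosure Om (mapply T u).
  move=> u Hu. apply: (@lim_clos d Om (fun n => mapply (G' n) u)) => //.
  move=> n; exact: HpO. exact: Tnz.
have TclC : forall u, C u -> pclosure C (mapply T u).
  move=> u Hu. apply: (@lim_clos d C (fun n => mapply (G' n) u)) => //.
  move=> n; exact: HpC. apply: Tnz; exact: HCOm.
have dir1 : forall u w, Om u -> proportional w (mapply T u) -> openFace Om x w.
  move=> u w Hu [c [Hc Ew]].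
  have Hfu := Hf _ Hu. have Hfk := Hf _ HkO.
  have [sg [Hsg [Hu' Hsgn]]] : exists sg, (sg = 1 \/ sg = -1) /\ Om (vscale sg u) /\
      0 < dot f k * dot f (vscale sg u).
    case: (Rlt_dec 0 (dot f k * dot f u)) => h.
      exists 1; split; first by left. split. apply: (Om_scale HM HconeOm HopenOm Hf Hbd Hcvx) => //; lra.
      rewrite dot_scale; lra.
    exists (-1); split; first by right. split. apply: (Om_scale HM HconeOm HopenOm Hf Hbd Hcvx) => //; lra.
    rewrite dot_scale. have : dot f k * dot f u <> 0 by apply: Rmult_integral_contrapositive.
    lra.
  pose u' := vscale sg u.
  case: (HopenOm _ Hu') => e2 [He2 Hb2].
  pose D := 1 + \big[Rplus/0]_(j < d) Rabs (k j - u' j).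
  have HD : forall i, Rabs (k i - u' i) <= D - 1.
    move=> i. rewrite /D. have := @coord_le_sum d (fun j => k j - u' j) i. simpl. lra.
  have HD1 : 1 <= D. have := HD i0. have := Rabs_pos (k i0 - u' i0). lra.
  pose mn := Rmin epsk e2.
  have Hmn : 0 < mn by apply: Rmin_pos.
  pose dl := mn / (2 * D).
  have Hdl : 0 < dl by apply: Rdiv_lt_0_compat; lra.
  have Hdlb : forall i, dl * Rabs (k i - u' i) < mn.
    move=> i. have := HD i. move=> h. have : dl * Rabs (k i - u' i) <= dl * (D - 1).
      apply: Rmult_le_compat_l; lra.
    have -> : dl * (D - 1) = mn / 2 - dl by rewrite /dl; field; lra. lra.
  pose a := fun i => k i + dl * (k i - u' i).
  pose b := fun i => u' i + dl * (u' i - k i).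
  have Hca : close k a epsk.
    move=> i. rewrite /a. have -> : k i - (k i + dl * (k i - u' i)) = - (dl * (k i - u' i)) by ring.
    rewrite Rabs_Ropp Rabs_mult Rabs_right; last lra. have := Hdlb i. have := Rmin_l epsk e2. rewrite -/mn. lra.
  have Hcb : close u' b e2.
    move=> i. rewrite /b. have -> : u' i - (u' i + dl * (u' i - k i)) = dl * (k i - u' i) by ring.
    rewrite Rabs_mult Rabs_right; last lra. have := Hdlb i. have := Rmin_r epsk e2. rewrite -/mn. lra.
  have Ha := Hballk _ Hca. have Hb := Hb2 _ Hcb.
  have Sa := ball_sign HM HconeOm HopenOm Hf Hbd Hcvx Hballk Hca.
  have Sb := ball_sign HM HconeOm HopenOm Hf Hbd Hcvx Hb2 Hcb.
  have Sab : 0 < dot f a * dot f b.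
    apply: (@sign_trans _ (dot f u')); last exact: Sb.
    apply: (@sign_trans _ (dot f k)); last exact: Hsgn. rewrite Rmult_comm. exact: Sa.
  pose s1 := dl / (1 + 2 * dl). pose t1 := (1 + dl) / (1 + 2 * dl).
  have Ek : comb a b s1 = k.
    apply: vext => i. rewrite /comb /vadd /vscale /a /b /s1. field. lra.
  have Eu : comb a b t1 = u'.
    apply: vext => i. rewrite /comb /vadd /vscale /a /b /t1. field. lra.
  right. split.
    rewrite Ew. apply: pclosure_scale => //. exact: TclO.
  exists (mapply T a), (mapply T b), s1, t1. split.
    move=> r Hr.
    have -> : comb (mapply T a) (mapply T b) r = mapply T (comb a b r).
      apply: vext => i. by rewrite mapply_comb.
    apply: TclO. exact: (seg_Om HM HconeOm HopenOm Hf Hbd Hcvx).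
  have Hs1 : 0 < s1 < 1. rewrite /s1. split. apply: Rdiv_lt_0_compat; lra.
    apply: (Rmult_lt_reg_r (1 + 2 * dl)). lra. field_simplify; lra.
  have Ht1 : 0 < t1 < 1. rewrite /t1. split. apply: Rdiv_lt_0_compat; lra.
    apply: (Rmult_lt_reg_r (1 + 2 * dl)). lra. field_simplify; lra.
  split => //. split => //. split.
    exists 1; split; first lra. apply: vext => i. rewrite /vscale /comb /vadd /vscale -mapply_comb Ek HTk. ring.
  exists (c * sg); split.
    apply: Rmult_integral_contrapositive; split => //. case: Hsg => ->; lra.
  rewrite Ew. apply: vext => i. rewrite {1 2}/vscale /comb /vadd /vscale -mapply_comb Eu /u' mapply_scale.
  case: Hsg => ->; ring.
have keyL : forall w a b s0 t0, (forall r, 0 <= r <= 1 -> pclosure Om (comb a b r)) ->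
    0 < s0 < 1 -> 0 < t0 < 1 -> proportional x (comb a b s0) -> proportional w (comb a b t0) ->
    exists u, Om u /\ proportional w (mapply T u) /\ (pclosure C w -> C u).
  move=> w a b s0 t0 Hseg Hs0 Ht0 [al [Hal Ex]] [be [Hbe Ew]].
  pose e := fun r => vscale al (comb a b r).
  have He : forall r, 0 <= r <= 1 -> pclosure Om (e r).
    move=> r Hr. apply: pclosure_scale => //. exact: Hseg.
  have Hes : forall r1 r2, 0 <= r1 <= 1 -> 0 <= r2 <= 1 -> 0 < dot f (e r1) * dot f (e r2).
    move=> r1 r2 H1 H2. rewrite /e !dot_scale.
    have := seg_sign HM HconeOm HopenOm Hf Hbd Hcvx Hseg H1 H2.
    have : 0 < al * al by nra. move=> h1 h2.
    have -> : al * dot f (comb a b r1) * (al * dot f (comb a b r2)) =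
              (al * al) * (dot f (comb a b r1) * dot f (comb a b r2)) by ring.
    exact: Rmult_lt_0_compat.
  have Ex' : x = e s0 by exact Ex.
  pose y' := e t0.
  have Hp0e : forall r, 0 <= r <= 1 -> 0 < dot f p0 * dot f (e r).
    move=> r Hr. apply: (@sign_trans _ (dot f x)) => //. rewrite Ex'. apply: Hes => //; lra.
  pose lam := Rmin (Rmin s0 (1 - s0)) (Rmin t0 (1 - t0)).
  have Hl1 : lam <= s0 by apply: Rle_trans (Rmin_l _ _) (Rmin_l _ _).
  have Hl2 : lam <= 1 - s0 by apply: Rle_trans (Rmin_l _ _) (Rmin_r _ _).
  have Hl3 : lam <= t0 by apply: Rle_trans (Rmin_r _ _) (Rmin_l _ _).
  have Hl4 : lam <= 1 - t0 by apply: Rle_trans (Rmin_r _ _) (Rmin_r _ _).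
  have Hlam : 0 < lam. apply: Rmin_pos; apply: Rmin_pos; lra.
  pose rr := fun mu => s0 + mu * (t0 - s0).
  have Hrr : forall mu, - lam <= mu <= 1 + lam -> 0 <= rr mu <= 1.
    move=> mu Hmu. exact: (rmu_in Hs0 Ht0 (Rlt_le _ _ Hlam) Hl1 Hl2 Hl3 Hl4 Hmu).
  have HE : forall mu, e (rr mu) = (fun i => x i + mu * (y' i - x i)).
    move=> mu. apply: vext => i. rewrite Ex' /y' /e /vscale /comb /vadd /vscale /rr. ring.
  pose V := fun n => mapply (Hn n) (fun i => y' i - x i).
  pose P := fun n mu => (fun i => K' n i + (s' n * mu) * V n i).
  have HPeq : forall n mu, P n mu = mapply (Hn n) (comb p0 (fun i => x i + mu * (y' i - x i)) (s' n)).
    move=> n mu.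
    have -> : comb p0 (fun i => x i + mu * (y' i - x i)) (s' n) = (fun i => q' n i + (s' n * mu) * (y' i - x i)).
      apply: vext => i. rewrite /comb /vadd /vscale /q' /q /s' /comb /vadd /vscale. ring.
    apply: vext => i. rewrite mapply_aff -HGK HHG. done.
  have Hs'b : forall n, 1/2 <= s' n < 1 by move=> n; exact: Hsb.
  have HZ : forall n mu, - lam <= mu <= 1 + lam -> Om (P n mu).
    move=> n mu Hmu. rewrite HPeq. apply: HpHO. rewrite -HE.
    apply: (interior_clos HM HconeOm HopenOm Hf Hbd Hcvx Hp0O (He _ (Hrr _ Hmu)) (Hp0e _ (Hrr _ Hmu))).
    have := Hs'b n; lra.
  have FZ : forall n mu, dot f (P n mu) = dot f (K' n) + mu * (s' n * dot f (V n)).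
    move=> n mu. rewrite /P dot_aff. ring.
  have HPs : forall n mu, - lam <= mu <= 1 + lam -> 0 < dot f (K' n) * dot f (P n mu).
    move=> n mu Hmu. rewrite FZ.
    case: (Rle_dec 0 mu) => h.
      have := @aff_sign (dot f (K' n)) (s' n * dot f (V n)) 0 mu h.
      rewrite Rmult_0_l Rplus_0_r. apply => t Ht. rewrite -FZ. apply: Hf. apply: HZ. lra.
    have := @aff_sign (dot f (K' n)) (s' n * dot f (V n)) mu 0 ltac:(lra).
    rewrite Rmult_0_l Rplus_0_r. move=> H. rewrite Rmult_comm. apply: H => t Ht. rewrite -FZ. apply: Hf. apply: HZ. lra.
  have HVb : forall n j, Rabs (V n j) <= 6 * M * (FS f * MK) / lam.
    move=> n j. set A := dot f (K' n). set X := s' n * dot f (V n).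
    have S1 := HPs n (- lam) ltac:(lra). have S2 := HPs n (1 + lam) ltac:(lra).
    rewrite !FZ -/A -/X in S1 S2.
    have HX : Rabs X <= Rabs A / lam.
      apply: sB_bound => //.
      have -> : (A - lam * X) * A = A * (A + - lam * X) by ring. done.
    have HKn : K (K' n) := (Hch (phi n)).2.1.
    have HA : Rabs A <= FS f * MK by apply: dot_bound => i; exact: HKb.
    have B1 := Om_bound HM HconeOm HopenOm Hf Hbd Hcvx j (HZ n (- lam) ltac:(lra)).
    have B0 := Om_bound HM HconeOm HopenOm Hf Hbd Hcvx j (HCOm _ (HKC _ HKn)).
    rewrite FZ -/A -/X /P /= in B1. rewrite -/A in B0.
    have Hsn := Hs'b n.
    have h0 : lam * Rabs X <= Rabs A.
      have := Rmult_le_compat_l lam _ _ (Rlt_le _ _ Hlam) HX.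
      have -> : lam * (Rabs A / lam) = Rabs A by field; lra. done.
    have h1 : Rabs (A + - lam * X) <= 2 * Rabs A.
      apply: Rle_trans (Rabs_triang _ _) _. rewrite Rabs_mult Rabs_Ropp (Rabs_right lam); lra.
    have h2 : lam * s' n * Rabs (V n j) <= 3 * M * Rabs A.
      have E : lam * s' n * V n j = K' n j - (K' n j + (s' n * - lam) * V n j) by ring.
      have E2 : Rabs (lam * s' n * V n j) = lam * s' n * Rabs (V n j).
        rewrite !Rabs_mult (Rabs_right lam) ?(Rabs_right (s' n)); lra.
      rewrite -E2 E. apply: Rle_trans (Rabs_triang _ _) _. rewrite Rabs_Ropp.
      have := Rmult_le_compat_l M _ _ HM h1. lra.
    have h3 : lam * Rabs (V n j) <= 6 * M * Rabs A.
      have hV := Rabs_pos (V n j).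
      have h4 : 0 <= lam * Rabs (V n j) * (2 * s' n - 1).
        apply: Rmult_le_pos; [apply: Rmult_le_pos; lra | lra].
      have E : lam * Rabs (V n j) * (2 * s' n - 1) = 2 * (lam * s' n * Rabs (V n j)) - lam * Rabs (V n j) by ring.
      lra.
    apply: (Rmult_le_reg_l lam) => //.
    have -> : lam * (6 * M * (FS f * MK) / lam) = 6 * M * (FS f * MK) by field; lra.
    apply: Rle_trans h3 _. have := Rmult_le_compat_l (6 * M) _ _ ltac:(lra) HA. lra.
  have [psi [v [Hpsi Hv]]] := @BWfin 'I_d (fun n => V n) _ HVb.
  have HK2 : forall i, Un_cv (fun n => K' (psi n) i) (k i).
    move=> i. exact: (@cv_sub (fun n => K' n i) (k i) psi Hpsi (HK' i)).
  have HG2 : forall i j, Un_cv (fun n => G' (psi n) i j) (T i j).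
    move=> i j. exact: (@cv_sub (fun n => G' n i j) (T i j) psi Hpsi (HG' i j)).
  have Hs2 : Un_cv (fun n => s' (psi n)) 1 by exact: (@cv_sub s' 1 psi Hpsi Hs').
  have Pconv : forall mu i, Un_cv (fun n => P (psi n) mu i) (k i + mu * v i).
    move=> mu i. rewrite /P.
    have := CV_plus _ _ _ _ (HK2 i) (CV_mult _ _ _ _ (CV_mult _ _ _ _ Hs2 (cv_const mu)) (Hv i)).
    by rewrite Rmult_1_l.
  pose u := fun i => k i + v i.
  have Pconv1 : forall i, Un_cv (fun n => P (psi n) 1 i) (u i).
    move=> i. have := Pconv 1 i. by rewrite Rmult_1_l.
  have Hu : Om u.
    pose w1 := fun i => k i + (1 + lam) * v i.
    have := @interior_limit d Om f M HM HconeOm HopenOm Hf Hbd Hcvx k w1 (1 / (1 + lam)) HkO.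
    have -> : comb k w1 (1 / (1 + lam)) = u.
      apply: vext => i. rewrite /comb /vadd /vscale /w1 /u. field. lra.
    apply.
      move=> e0 He0.
      have [N1 HN1] := @cv_unif 'I_d (fun n => P (psi n) (1 + lam)) w1 (Pconv (1 + lam)) e0 He0.
      have [N2 HN2] := @cv_unif 'I_d (fun n => K' (psi n)) k HK2 epsk Hepsk.
      pose n := Nat.max N1 N2.
      exists (P (psi n) (1 + lam)); split. apply: HZ; lra. split.
        have Sa := HPs (psi n) (1 + lam) ltac:(lra).
        have Hc : close k (K' (psi n)) epsk.
          move=> i. rewrite -Rabs_Ropp Ropp_minus_distr. apply: HN2. lia.
        have Sb := ball_sign HM HconeOm HopenOm Hf Hbd Hcvx Hballk Hc.
        rewrite Rmult_comm. apply: (@sign_trans _ (dot f (K' (psi n)))) => //; rewrite Rmult_comm //.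
      move=> i. rewrite -Rabs_Ropp Ropp_minus_distr. apply: HN1. lia.
    split. apply: Rdiv_le_0_compat; lra.
    apply: (Rmult_lt_reg_r (1 + lam)). lra. field_simplify; lra.
  have TU : mapply T u = y'.
    apply: vext => i.
    apply: (UL_sequence (fun n => mapply (G' (psi n)) (P (psi n) 1) i)).
      exact: (@mapply_cv d (fun n => G' (psi n)) T (fun n => P (psi n) 1) u i HG2 Pconv1).
    apply: (cv_ext (u := fun n => (1 - s' (psi n)) * p0 i + s' (psi n) * (x i + 1 * (y' i - x i)))).
      move=> n. rewrite HPeq HGH. done.
    have := CV_plus _ _ _ _ (CV_mult _ _ _ _ (CV_minus _ _ _ _ (cv_const 1) Hs2) (cv_const (p0 i)))
                          (CV_mult _ _ _ _ Hs2 (cv_const (x i + 1 * (y' i - x i)))).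
    have -> : (1 - 1) * p0 i + 1 * (x i + 1 * (y' i - x i)) = y' i by ring. done.
  exists u; split => //. split.
    exists (be / al); split.
      apply: Rmult_integral_contrapositive; split => //. exact: Rinv_neq_0_compat.
    rewrite TU Ew. apply: vext => i. rewrite /y' /e /vscale. field. done.
  move=> HwC.
  have Hy'C : pclosure C y'.
    have -> : y' = vscale (al / be) w.
      rewrite Ew. apply: vext => i. rewrite /y' /e /vscale. field. done.
    apply: pclosure_scale => //. apply: Rmult_integral_contrapositive; split => //. exact: Rinv_neq_0_compat.
  have HPC : forall n, C (P n 1).
    move=> n. rewrite HPeq. apply: HpHC.
    have -> : comb p0 (fun i => x i + 1 * (y' i - x i)) (s' n) = comb p0 y' (s' n).
      apply: vext => i. rewrite /comb /vadd /vscale. ring.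
    apply: L8 => //. apply: Hp0e; lra. have := Hs'b n; lra.
  apply: HclC => //. apply: (@lim_clos d C (fun n => P (psi n) 1)) => //.
  exact: Om_nz.
have HxnO : ~ Om x. move=> h. apply: HxnC. exact: HclC.
exists T; split.
  move=> E. apply: HT0. by rewrite E.
split.
  move=> eps He.
  have [N HN] := @cv_unif ('I_d * 'I_d)%type (fun n p => G' n p.1 p.2) (fun p => T p.1 p.2)
     (fun p => HG' p.1 p.2) eps He.
  exists (G' N); split => // i j. rewrite -Rabs_Ropp Ropp_minus_distr. exact: (HN N (le_n N) (i, j)).
split; first exact: Tnz.
split.
  move=> w; split.
    move=> [u [Hu Hw]]. exact: dir1 Hw.
  case=> [[c [Hc E]] | [Hw [a [b [s0 [t0 [Hseg [Hs0 [Ht0 [Hx Hw']]]]]]]]]].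
    exists k; split => //. rewrite HTk. by exists c.
  have [u [Hu [Hpu _]]] := keyL _ _ _ _ _ Hseg Hs0 Ht0 Hx Hw'. by exists u.
move=> w; split.
  move=> [u [Hu Hw]]. split; first exact: (dir1 u w (HCOm _ Hu) Hw).
  have HwC : pclosure C w.
    case: Hw => c [Hc ->]. apply: pclosure_scale => //. exact: TclC.
  have HwnO : ~ Om w := face_notOm HM HconeOm HopenOm Hf Hbd Hcvx HxnO (dir1 u w (HCOm _ Hu) Hw).
  split; last by move=> /HCOm.
  split => // [[Hrel _]]. exact: HwnO (HCOm _ Hrel).
case=> [[[c [Hc E]] | [Hw [a [b [s0 [t0 [Hseg [Hs0 [Ht0 [Hx Hw']]]]]]]]]] Hib].
  exists k; split; first exact: HKC. rewrite HTk. by exists c.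
have [u [Hu [Hpu HuC]]] := keyL _ _ _ _ _ Hseg Hs0 Ht0 Hx Hw'. exists u; split => //.
apply: HuC. exact: Hib.1.1.
Qed.
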